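(* Under the standing setup in the context, there are constants $K\ge1$ and $C\ge0$ such that \[\frac1K\rho(x,y)-C\le\rho_\phi([x],[y])\le K\rho(x,y)+C\quad\text{for all }x,y\in X.\] Consequently the collapsing map $\phi:X\to X^*$, $\phi(x)=[x]$, is a quasi-isometry between $(X,\rho)$ and $(X^*,\rho_\phi)$.
   Context: A semi-metric on a set $Z$ is a function $d:Z\times Z\to[0,\infty)$ with $d(x,y)=0$ iff $x=y$ and $d(x,y)=d(y,x)$. For $b\ge1$, $c\ge0$, a $(b,c)$-metric is a semi-metric with $d(x,z)\le b(d(x,y)+d(y,z))+c$ for all $x,y,z$. A map $g$ from a $(b,c)$-metric space $(X,\rho)$ to a semi-metric space $(Y,\sigma)$ is a quasi-isometry if there are $K\ge1$, $C\ge0$ with $\frac1K\rho(x,y)-C\le\sigma(g(x),g(y))\le K\rho(x,y)+C$ for all $x,y$. Standing setup. $X$ is a topological space (in the paper an $n$-manifold) carrying a $(b,c)$-metric $\rho$. A collapsing set consists of: a subset $S\subseteq X$; a family $\mathcal F$ of pairwise disjoint nonempty subsets of $S$ (''fibers'') whose union is $S$; and a subset $T\subseteq S$ meeting each fiber in exactly one point. The fibering is bounded: $f:=\sup_{F\in\mathcal F}\sup_{u,v\in F}\rho(u,v)<\infty$. For $a,a'\in T$, the length of a continuous path $\gamma:[0,1]\to T$ is $\ell(\gamma)=\sup\sum_{i=1}^k\rho(\gamma(t_{i-1}),\gamma(t_i))$ over partitions $0=t_0<\dots<t_k=1$, and $\rho_p(a,a')$ is the infimum of $\ell(\gamma)$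 over continuous paths in $T$ from $a$ to $a'$. $T$ is a Lipschitz curve: there is $L\ge1$ with $\rho_p(a,a')\le L\,\rho(a,a')$ for all $a,a'\in T$. The collapsing relation is $x\sim y$ iff $x=y$ or $x,y$ lie in a common fiber; $X^*=X/\!\sim$, $\phi(x)=[x]$. For $x\in X$ let $r_x=\inf_{s\in S}\rho(x,s)$; assume this infimum is attained and fix $x_S\in S$ with $\rho(x,x_S)=r_x$, taking $x_S=x$ when $x\in S$. Let $x'$ denote the unique point of $T$ in the fiber containing $x_S$. The collapsed metric is $\rho_\phi([x],[y])=\rho(x,y)$ if $x,y\notin S$ and $\rho(x,y)\le r_x+r_y$, and $\rho_\phi([x],[y])=\rho_p(x',y')+r_x+r_y$ otherwise. *)

(* Defs.v *)
From HB Require Import structures.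
From mathcomp Require Import all_boot all_order all_algebra.
From mathcomp Require Import all_classical all_reals all_analysis.
Set Implicit Arguments. Unset Strict Implicit. Unset Printing Implicit Defensive.
Import Order.TTheory GRing.Theory Num.Theory.
Local Open Scope classical_set_scope.
Local Open Scope ring_scope.

Section Collapse.
Variables (R : realType) (X : topologicalType) (rho : X -> X -> R).

Definition semi_metric : Prop :=
  (forall x y, 0 <= rho x y) /\ (forall x y, rho x y = 0 <-> x = y) /\
  (forall x y, rho x y = rho y x).

Definition bc_metric (b c : R) : Prop :=
  1 <= b /\ 0 <= c /\ semi_metric /\
  forall x y z, rho x z <= b * (rho x y + rho y z) + c.

Definition partition01 (k : nat) (t : nat -> R) : Prop :=
  (0 < k)%N /\ t 0%N = 0 /\ t k = 1 /\ forall i, (i < k)%N -> t i < t i.+1.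

Definition path_in (T : set X) (a a' : X) (g : R -> X) : Prop :=
  {within `[0, 1], continuous g} /\ (forall t, t \in `[0, 1] -> T (g t)) /\
  g 0 = a /\ g 1 = a'.

Definition path_length (g : R -> X) : \bar R :=
  ereal_sup [set e | exists (k : nat) (t : nat -> R), partition01 k t /\
              e = (\sum_(i < k) rho (g (t i)) (g (t i.+1)))%:E].

Definition rho_p (T : set X) (a a' : X) : \bar R :=
  ereal_inf [set path_length g | g in [set g | path_in T a a' g]].

Definition dist_to (S : set X) (x : X) : R := inf [set rho x s | s in S].

(* collapsed metric rho_phi([x],[y]), computed on representatives x, y,
   with xp x = x' the point of T in the fiber of the chosen nearest point x_S *)
Definition rho_phi (S T : set X) (xp : X -> X) (x y : X) : \bar R :=
  if `[< ~ S x /\ ~ S y /\ rho x y <= dist_to S x + dist_to S y >]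
  then (rho x y)%:E
  else (rho_p T (xp x) (xp y) + (dist_to S x)%:E + (dist_to S y)%:E)%E.

End Collapse.

(* Main.v *)
Require Import Defs.
From HB Require Import structures.
From mathcomp Require Import all_boot all_order all_algebra.
From mathcomp Require Import all_classical all_reals all_analysis.
From mathcomp Require Import ring lra.
Import Order.TTheory GRing.Theory Num.Theory.
Local Open Scope classical_set_scope.
Local Open Scope ring_scope.

Lemma path_length_ge (R : realType) (X : topologicalType) (rho : X -> X -> R) g :
  ((rho (g 0) (g 1))%:E <= path_length rho g)%E.
Proof.
apply: ereal_sup_ubound.
exists 1%N, (fun i => if i == 0%N then 0 else 1).
split; first by split => //; split => //; split => // i; rewrite ltnS leqn0 => /eqP ->/=; lra.
by rewrite big_ord1.
Qed.

Lemma rho_p_ge (R : realType) (X : topologicalType) (rho : X -> X -> R) T a a' :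
  ((rho a a')%:E <= rho_p rho T a a')%E.
Proof.
apply/ereal_infP => e [g [_ [_ [g0 g1]]] <-].
by move: (@path_length_ge _ _ rho g); rewrite g0 g1.
Qed.

Theorem mainTheorem9 (R : realType) (X : topologicalType) (rho : X -> X -> R)
  (b c : R) (S T : set X) (F : set (set X)) (xS xp : X -> X) (L : R) :
  bc_metric rho b c ->
  (* fibers: pairwise disjoint nonempty subsets of S covering S *)
  (forall A, F A -> A !=set0 /\ A `<=` S) ->
  (forall A B, F A -> F B -> A <> B -> A `&` B = set0) ->
  S = \bigcup_(A in F) A ->
  (* T meets each fiber in exactly one point *)
  T `<=` S ->
  (forall A, F A -> exists! t, A t /\ T t) ->
  (* bounded fibering *)
  (exists f : R, forall A, F A -> forall u v, A u -> A v -> rho u v <= f) ->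
  (* T is a Lipschitz curve *)
  1 <= L ->
  (forall a a', T a -> T a' -> (rho_p rho T a a' <= (L * rho a a')%:E)%E) ->
  (* chosen nearest points x_S, with x_S = x for x in S *)
  (forall x, S (xS x) /\ rho x (xS x) = dist_to rho S x) ->
  (forall x, S x -> xS x = x) ->
  (* x' = the point of T in the fiber containing x_S *)
  (forall x, T (xp x) /\ exists2 A, F A & A (xS x) /\ A (xp x)) ->
  exists K C : R, 1 <= K /\ 0 <= C /\
    forall x y : X,
      ((rho x y / K - C)%:E <= rho_phi rho S T xp x y)%E /\
      (rho_phi rho S T xp x y <= (K * rho x y + C)%:E)%E.
Proof.
move=> [b1 [c0 [[r0 [rE rS]] tri]]] _ _ _ _ _ [f hf] L1 Lip hxS hSx hxp.
pose f0 := Num.max f 0.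
have f00 : 0 <= f0 by rewrite le_max lexx orbT.
have hfib : forall x, rho (xp x) (xS x) <= f0.
  move=> x; case: (hxp x) => _ [A FA [a1 a2]].
  by apply: le_trans (hf A FA _ _ a2 a1) _; rewrite le_max lexx.
have hfib' : forall x, rho (xS x) (xp x) <= f0 by move=> x; rewrite rS.
have tri2 : forall x y z u v, rho x y <= u -> rho y z <= v -> rho x z <= b * (u + v) + c.
  move=> x y z u v h1 h2; apply: le_trans (tri x y z) _; rewrite lerD2r.
  by apply: ler_wpM2l; [lra | lra].
have b0 : 0 <= b by lra.
have b12 : b <= b ^+ 2 by rewrite expr2 -{1}(mul1r b); apply: ler_wpM2r.
have b2 : 1 <= b ^+ 2 by lra.
have b3 : b ^+ 2 <= b ^+ 3 by rewrite (exprS _ 2) -{1}(mul1r (b^+2)); apply: ler_wpM2r => //; lra.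
have b4 : b ^+ 3 <= b ^+ 4 by rewrite (exprS _ 3) -{1}(mul1r (b^+3)); apply: ler_wpM2r => //; lra.
have b14 : b <= b ^+ 4 by lra.
have b24 : b^+2 <= b ^+ 4 by lra.
have mono : forall u v w, 0 <= w -> u <= v -> u * w <= v * w.
  by move=> u v w w0 uv; apply: ler_wpM2r.
have rxE : forall x, dist_to rho S x = rho x (xS x) by move=> x; rewrite (proj2 (hxS x)).
have rx0 : forall x, 0 <= dist_to rho S x by move=> x; rewrite rxE.
have rxS : forall x, S x -> dist_to rho S x = 0.
  by move=> x Sx; rewrite rxE hSx //; apply/rE.
have rxle : forall x y, S y -> dist_to rho S x <= rho x y.
  move=> x y Sy; apply: ge_inf; last by exists y.
  by exists 0 => _ [s _ <-].
pose C0 := b^+4 * f0 + b^+3 * c + b^+3 * f0 + b^+2 * c + b * c + c.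
pose C1 := b^+4 * f0 + b^+3 * c + b^+2 * c + b^+2 * f0 + b * c + c.
have p4 : 0 <= b^+4 by lra.
have p3 : 0 <= b^+3 by lra.
have p2 : 0 <= b^+2 by lra.
have C00 : 0 <= C0 by rewrite /C0 !addr_ge0 // mulr_ge0.
have C10 : 0 <= C1 by rewrite /C1 !addr_ge0 // mulr_ge0.
pose K := 3 * L * b^+4 + b^+4 + 1.
have LB : 0 <= L * b ^+ 4 by apply: mulr_ge0; lra.
have K1 : 1 <= K by rewrite /K; lra.
exists K, (C0 + L * C1); split => //; split; first by rewrite addr_ge0 // mulr_ge0 //; lra.
move=> x y.
set rx := dist_to rho S x; set ry := dist_to rho S y.
have rx0' : 0 <= rx := rx0 x. have ry0' : 0 <= ry := rx0 y.
have dxy0 := r0 x y.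
set P := rho (xp x) (xp y).
have P0 : 0 <= P := r0 _ _.
have hxx : rho x (xS x) <= rx by rewrite /rx rxE.
have hxx' : rx <= rho x (xS x) by rewrite /rx rxE.
have low : rho x y <= b^+4 * (P + rx + ry) + C0.
  have e1 : rho (xp y) y <= b * (f0 + ry) + c.
    apply: tri2 (hfib y) _; by rewrite rS /ry rxE.
  have e2 : rho (xp x) y <= b * (P + (b * (f0 + ry) + c)) + c by apply: tri2 e1.
  have e3 := tri2 _ _ _ _ _ (hfib' x) e2.
  have e4 := tri2 _ _ _ _ _ hxx e3.
  apply: le_trans e4 _; rewrite /C0 -/rx.
  have h1 : b * rx <= b^+4 * rx by apply: mono.
  have h2 : b^+3 * P <= b^+4 * P by apply: mono.
  have h3 : b^+2 * f0 <= b^+3 * f0 by apply: mono.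
  have -> : b * (rx + (b * (f0 + (b * (P + (b * (f0 + ry) + c)) + c)) + c)) + c
    = b * rx + b^+2 * f0 + b^+3 * P + b^+4 * f0 + b^+4 * ry + b^+3 * c + b^+2 * c + b * c + c.
    by rewrite !exprS expr0; ring.
  lra.
have lowK : rho x y / K - (C0 + L * C1) <= P + rx + ry.
  have h : rho x y / K <= P + rx + ry + (C0 + L * C1).
    rewrite ler_pdivrMr; last by lra.
    have H1 : b^+4 * (P + rx + ry) <= K * (P + rx + ry).
      apply: mono; [lra | rewrite /K; lra].
    have H2 : C0 <= C0 * K by rewrite -{1}(mulr1 C0); apply: ler_wpM2l.
    have H3 : 0 <= L * C1 * K by apply: mulr_ge0 => //; [apply: mulr_ge0 |]; lra.
    have -> : (P + rx + ry + (C0 + L * C1)) * K = K * (P + rx + ry) + C0 * K + L * C1 * K by ring.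
    lra.
  lra.
rewrite /rho_phi; case: asboolP => [[nSx [nSy hle]]|hc].
  have hK : rho x y <= K * rho x y by rewrite -{1}(mul1r (rho x y)); apply: mono.
  have C0' : 0 <= C0 + L * C1 by have := mulr_ge0 (_ : 0 <= L) C10; lra.
  split; rewrite lee_fin.
    have : rho x y / K <= rho x y by rewrite ler_pdivrMr; [rewrite mulrC | lra].
    lra.
  lra.
have hr : rx + ry <= rho x y.
  case: (pselect (S x)) => Sx.
    by rewrite /rx rxS // add0r rS rxle.
  case: (pselect (S y)) => Sy.
    by rewrite /ry rxS // addr0 rxle.
  case: (leP (rho x y) (rx + ry)) => h; last exact: ltW.
  by exfalso; apply: hc.
have Tx := proj1 (hxp x); have Ty := proj1 (hxp y).
split.
  apply: le_trans (_ : ((P + rx)%:E + ry%:E <= _)%E).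
    by rewrite -EFinD lee_fin.
  apply: leeD2r; rewrite EFinD; apply: leeD2r; exact: rho_p_ge.
apply: le_trans (_ : (((L * P) + rx)%:E + ry%:E <= _)%E).
  apply: leeD2r; rewrite EFinD; apply: leeD2r; exact: Lip.
rewrite -EFinD lee_fin.
have up : P <= 3 * b^+4 * rho x y + C1.
  have e1 : rho y (xp y) <= b * (ry + f0) + c.
    apply: tri2 _ _; first by rewrite /ry rxE.
    by rewrite rS; apply: hfib.
  have e2 := tri2 _ _ _ _ _ (lexx (rho x y)) e1.
  have hxx2 : rho (xS x) x <= rx by rewrite rS.
  have e3 := tri2 _ _ _ _ _ hxx2 e2.
  have e4 := tri2 _ _ _ _ _ (hfib x) e3.
  apply: le_trans e4 _; rewrite /C1 -/rx.
  have -> : b * (f0 + (b * (rx + (b * (rho x y + (b * (ry + f0) + c)) + c)) + c)) + c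
    = b * f0 + b^+2 * rx + b^+3 * rho x y + b^+4 * ry + b^+4 * f0 + b^+3 * c + b^+2 * c + b * c + c.
    by rewrite !exprS expr0; ring.
  have h1 : b^+2 * rx <= b^+4 * rho x y.
    have : b^+2 * rx <= b^+4 * rx by apply: mono.
    have : b^+4 * rx <= b^+4 * rho x y by apply: ler_wpM2l; lra.
    lra.
  have h2 : b^+3 * rho x y <= b^+4 * rho x y by apply: mono.
  have h3 : b^+4 * ry <= b^+4 * rho x y by apply: ler_wpM2l; lra.
  have h4 : b * f0 <= b^+2 * f0 by apply: mono.
  lra.
have : L * P <= L * (3 * b^+4 * rho x y + C1) by apply: ler_wpM2l; lra.
have : 0 <= b^+4 * rho x y by apply: mulr_ge0; lra.
rewrite /K; lra.
Qed.
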